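(* Let $\underline{\mathbb{G}}=(\mathbb{G},\mathcal{V},\omega_{\mathcal{V}},\mathcal{F},\omega_{\mathcal{F}})$ be a packaged ribbon graph and let $e$ be an edge of $\mathbb{G}$. Then \[(\underline{\mathbb{G}}\backslash e)^* = \underline{\mathbb{G}}^*/e \qquad\text{and}\qquad (\underline{\mathbb{G}}/ e)^* = \underline{\mathbb{G}}^*\backslash e.\]
   Context: All ribbon graphs are orientable. A ribbon graph $\mathbb{G}=(V,E)$ is an orientable surface with boundary formed as a union of discs $V$ (vertices) and discs $E$ (edges) such that vertices and edges meet in disjoint arcs, each arc lies on the boundary of exactly one vertex and one edge, and each edge contains exactly two such arcs. $\mathbb{G}\backslash e$ is obtained by removing the edge $e$; $\mathbb{G}/e$ (contraction) is obtained by taking the boundary curve(s) of $e\cup u\cup v$ (where $u,v$ are the ends of $e$, possibly equal), attaching a disc to each such curve to form new vertices, and removing $e,u,v$. The dual $\mathbb{G}^*$ is obtained by capping each boundary component of $\mathbb{G}$ with a disc; these discs are the vertices of $\mathbb{G}^*$ and the edges are the same as those of $\mathbb{G}$. Thus vertices of $\mathbb{G}$ correspond to boundary components of $\mathbb{G}^*$ and boundary components of $\mathbb{G}$ to vertices of $\mathbb{G}^*$. A packaged ribbon graph is a tuple $\underline{\mathbb{G}}=(\mathbb{G},\mathcal{V},\omega_{\mathcal{V}},\mathcal{F},\omega_{\mathcal{F}})$ where $\mathbb{G}=(V,E)$ is a ribbon graph with set of boundary components $F$, $\mathcal{V}$ is a partition of $V$, $\mathcal{F}$ is a partition of $F$,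 and $\omega_{\mathcal{V}}:\mathcal{V}\to\mathbb{N}_0$, $\omega_{\mathcal{F}}:\mathcal{F}\to\mathbb{N}_0$ are weightings. $[v]$ and $[f]$ denote the blocks containing $v$ and $f$. Deletion $\underline{\mathbb{G}}\backslash e$: the ribbon graph is $\mathbb{G}\backslash e$, and $\mathcal{V},\omega_{\mathcal{V}}$ are unchanged; boundary components not meeting $e$ persist with their blocks and weights. (i) If $e$ meets a single boundary component $f$ (twice), deleting $e$ creates two boundary components $f',g'$ in place of $f$; the block $[f]$ is replaced by $([f]\setminus\{f\})\cup\{f',g'\}$ with weight $\omega_{\mathcal{F}}([f])+1$. (ii) If $e$ meets two boundary components $f\neq g$ with $[f]=[g]$, deletion creates one boundary component $f'$; the block is replaced by $([f]\setminus\{f,g\})\cup\{f'\}$ with weight $\omega_{\mathcal{F}}([f])+1$. (iii) If $e$ meets $f\ne g$ with $[f]\neq[g]$, deletion creates one boundary component $f'$; the blocks $[f],[g]$ are replaced by the single block $([f]\cup[g]\setminus\{f,g\})\cup\{f'\}$ with weight $\omega_{\mathcal{F}}([f])+\omega_{\mathcal{F}}([g])$. All other blocks and weights are unchanged. Contraction $\underline{\mathbb{G}}/e$: the ribbon graph is $\mathbb{G}/e$; boundary components of $\mathbb{G}$ and $\mathbb{G}/e$ correspond naturally, and $\mathcal{F},\omega_{\mathcal{F}}$ are transported along this correspondence. (i) If $e$ is a loop at $u$, contraction replaces $u$ by two vertices $u',v'$; the block $[u]$ is replaced by $([u]\setminus\{u\})\cup\{u',v'\}$ with weight $\omega_{\mathcal{V}}([u])+1$.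 (ii) If $e$ is a non-loop with ends $u\ne v$ and $[u]=[v]$, contraction gives one vertex $u'$; the block is replaced by $([u]\setminus\{u,v\})\cup\{u'\}$ with weight $\omega_{\mathcal{V}}([u])+1$. (iii) If $e$ has ends $u\neq v$ with $[u]\ne[v]$, the blocks $[u],[v]$ are replaced by $([u]\cup[v]\setminus\{u,v\})\cup\{u'\}$ with weight $\omega_{\mathcal{V}}([u])+\omega_{\mathcal{V}}([v])$. All other blocks and weights are unchanged. Dual: $\underline{\mathbb{G}}^*=(\mathbb{G}^*,\mathcal{V}^*,\omega_{\mathcal{V}^*},\mathcal{F}^*,\omega_{\mathcal{F}^*})$, where $\mathcal{V}^*$ (a partition of the vertices of $\mathbb{G}^*$) and its weighting are induced from $\mathcal{F},\omega_{\mathcal{F}}$ via the correspondence between boundary components of $\mathbb{G}$ and vertices of $\mathbb{G}^*$, and $\mathcal{F}^*,\omega_{\mathcal{F}^*}$ are induced from $\mathcal{V},\omega_{\mathcal{V}}$ via the correspondence between vertices of $\mathbb{G}$ and boundary components of $\mathbb{G}^*$. Edges of $\mathbb{G}^*$ are identified with those of $\mathbb{G}$. *)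

(* Defs.v *)
From mathcomp Require Import all_boot all_order.
Set Implicit Arguments. Unset Strict Implicit. Unset Printing Implicit Defensive.

(* A packaged ribbon graph whose darts live in a fixed finite type T.
   - [dom] : the set of darts ("corners") currently in use;
   - [al]  : edge involution.  A dart x with [al x != x] is a half-edge, the
             edge being {x, al x}.  A dart with [al x = x] is a *marker*
             standing for an isolated vertex (it is also [sg]-fixed);
   - [sg]  : rotation system; vertices = [sg]-orbits of [dom];
   - boundary components = orbits of the face permutation [ph x = sg (al x)];
   - the partition calV of vertices is encoded as an equivalence relation
     [vrel] on darts saturated by [sg]-orbits, its weighting by [wV]
     (constant on classes); likewise calF by [frel] / [wF] w.r.t. [ph]. *)
Record pgraph (T : finType) := PGraph {
  dom : {set T};
  sg : T -> T;
  al : T -> T;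
  vrel : rel T;
  wV : T -> nat;
  frel : rel T;
  wF : T -> nat }.

Section Ops.
Variable T : finType.
Implicit Types (G : pgraph T) (h : T).

Definition ph G (x : T) : T := sg G (al G x).

Definition wpart (D : {set T}) (r : rel T) (f : T -> T) (w : T -> nat) : Prop :=
  [/\ (forall x, x \in D -> r x x),
      (forall x y, x \in D -> y \in D -> r x y -> r y x),
      (forall x y z, x \in D -> y \in D -> z \in D -> r x y -> r y z -> r x z),
      (forall x y, x \in D -> y \in D -> fconnect f x y -> r x y) &
      (forall x y, x \in D -> y \in D -> r x y -> w x = w y)].

Definition wf_pgraph G : Prop :=
  [/\ (forall x, x \in dom G -> sg G x \in dom G),
      {in dom G &, injective (sg G)},
      (forall x, x \in dom G -> al G x \in dom G /\ al G (al G x) = x) &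
      (forall x, x \in dom G -> al G x = x -> sg G x = x)] /\
  wpart (dom G) (vrel G) (sg G) (wV G) /\
  wpart (dom G) (frel G) (ph G) (wF G).

Definition dual G : pgraph T :=
  PGraph (dom G) (ph G) (al G) (frel G) (wF G) (vrel G) (wV G).

Definition onE G h (x : T) : bool := (x == h) || (x == al G h).

(* block update: either e meets one object (x) or two objects in the same
   block (weight + 1), or two objects in different blocks (merge, add weights) *)
Definition upd_rel (sameblk : bool) (r : rel T) (a b : T) : rel T :=
  fun x y => if sameblk then r x y
             else [|| r x y, r x a && r y b | r x b && r y a].
Definition upd_w (sameblk : bool) (r : rel T) (w : T -> nat) (a b : T) : T -> nat :=
  fun x => if sameblk then (if r x a then (w a).+1 else w x)
           else (if r x a || r x b then w a + w b else w x).

Definition del_sg G h (x : T) : T :=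
  if onE G h x then x else
  let y := sg G x in
  if onE G h y then (let z := sg G y in if onE G h z then sg G z else z) else y.
(* a dart of e survives as a marker iff its vertex consisted only of darts of e *)
Definition del_markh G h : bool :=
  (sg G h == h) || ((sg G h == al G h) && (sg G (al G h) == h)).
Definition del_markk G h : bool := sg G (al G h) == al G h.
Definition pdel G h : pgraph T :=
  let k := al G h in
  let sameblk := fconnect (ph G) h k || frel G h k in
  PGraph [set x in dom G | [|| ~~ onE G h x, (x == h) && del_markh G h
                                | (x == k) && del_markk G h]]
         (del_sg G h)
         (fun x => if onE G h x then x else al G x)
         (vrel G) (wV G)
         (upd_rel sameblk (frel G) h k) (upd_w sameblk (frel G) (wF G) h k).

(* new rotation: boundary of e u v; the face permutation skips e *)
Definition con_sg G h (x : T) : T :=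
  if onE G h x then x else
  let y := sg G x in
  if onE G h y then (let z := ph G y in if onE G h z then ph G z else z) else y.
(* markers for new vertices without darts; a marker carries the boundary
   component of the corresponding (new) isolated vertex *)
Definition con_markh G h : bool :=
  if fconnect (sg G) h (al G h) then sg G (al G h) == h
  else (sg G h == h) && (sg G (al G h) == al G h).
Definition con_markk G h : bool :=
  fconnect (sg G) h (al G h) && (sg G h == al G h).
Definition pcontr G h : pgraph T :=
  let k := al G h in
  let sameblk := fconnect (sg G) h k || vrel G h k in
  PGraph [set x in dom G | [|| ~~ onE G h x, (x == h) && con_markh G h
                                | (x == k) && con_markk G h]]
         (con_sg G h)
         (fun x => if onE G h x then x else al G x)
         (upd_rel sameblk (vrel G) h k) (upd_w sameblk (vrel G) (wV G) h k)
         (frel G) (wF G).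

(* isomorphism of packaged ribbon graphs under which every edge corresponds
   to itself (the identification of edges used in the paper) *)
Definition pg_iso (G1 G2 : pgraph T) : Prop :=
  exists f : T -> T,
  [/\ (forall x, x \in dom G1 -> f x \in dom G2),
      {in dom G1 &, injective f} &
      (forall y, y \in dom G2 -> exists2 x, x \in dom G1 & f x = y)] /\
  [/\ (forall x, x \in dom G1 -> f (sg G1 x) = sg G2 (f x) /\ f (al G1 x) = al G2 (f x)),
      (forall x y, x \in dom G1 -> y \in dom G1 ->
          vrel G2 (f x) (f y) = vrel G1 x y /\ frel G2 (f x) (f y) = frel G1 x y),
      (forall x, x \in dom G1 -> wV G2 (f x) = wV G1 x /\ wF G2 (f x) = wF G1 x) &
      (forall x, x \in dom G1 -> al G1 x != x -> f x = x \/ f x = al G1 x)].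
End Ops.

(* Main.v *)
Require Import Defs.
From mathcomp Require Import all_boot.
Set Implicit Arguments. Unset Strict Implicit. Unset Printing Implicit Defensive.

Section Aux.
Variable T : finType.

Lemma iter_eq_on (f g : T -> T) (D : {set T}) x :
  x \in D -> (forall z, z \in D -> f z \in D) -> {in D, f =1 g} ->
  forall n, iter n f x = iter n g x /\ iter n f x \in D.
Proof.
move=> xD fD fg; elim=> [|n [IH1 IH2]] //=.
by rewrite -IH1 fg //; split => //; rewrite -fg // fD.
Qed.

Lemma fconnect_eq_on (f g : T -> T) (D : {set T}) x y :
  x \in D -> (forall z, z \in D -> f z \in D) -> {in D, f =1 g} ->
  fconnect f x y = fconnect g x y.
Proof.
move=> xD fD fg; have H := iter_eq_on xD fD fg.
apply/idP/idP => C.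
  by rewrite -(iter_findex C) (H _).1 fconnect_iter.
by rewrite -(iter_findex C) -(H _).1 fconnect_iter.
Qed.

Lemma fconnect_sym_on (f : T -> T) (D : {set T}) x y :
  (forall z, z \in D -> f z \in D) -> {in D &, injective f} ->
  x \in D -> y \in D -> fconnect f x y -> fconnect f y x.
Proof.
move=> fD finj xD yD.
pose f' z := if z \in D then f z else z.
have E : {in D, f =1 f'} by move=> z zD; rewrite /f' zD.
have f'D : forall z, z \in D -> f' z \in D by move=> z zD; rewrite /f' zD fD.
have inj' : injective f'.
  move=> a b; rewrite /f'.
  case aD: (a \in D); case bD: (b \in D) => // e.
  - exact: finj.
  - by move: (fD _ aD); rewrite e bD.
  - by move: (fD _ bD); rewrite -e aD.
rewrite (fconnect_eq_on _ xD fD E) (fconnect_eq_on _ yD fD E) fconnect_sym //.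
Qed.

Lemma fconnect_fix (f : T -> T) x y : f x = x -> fconnect f x y -> y = x.
Proof.
move=> fx C; rewrite -(iter_findex C); elim: (findex f x y) => //= n ->; exact fx.
Qed.
End Aux.

Theorem proposition2p7 (T : finType) (G : pgraph T) (h : T) :
  wf_pgraph G -> h \in dom G -> al G h != h ->
  pg_iso (dual (pdel G h)) (pcontr (dual G) h) /\
  pg_iso (dual (pcontr G h)) (pdel (dual G) h).
Proof.
rewrite /wf_pgraph => -[[sgD sginj alD alfix] [_ _]] hD hk0.
set k := al G h.
have [kD hk] := alD _ hD; rewrite -/k in kD hk.
have hk' : al G (al G h) = h := hk.
have alinj : {in dom G &, injective (al G)}.
  by move=> a b aD bD e; rewrite -(alD _ aD).2 -(alD _ bD).2 e.
have phD : forall z, z \in dom G -> ph G z \in dom G.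
  by move=> z zD; rewrite /ph sgD // (alD _ zD).1.
have phinj : {in dom G &, injective (ph G)}.
  move=> a b aD bD e; apply: alinj => //; apply: sginj => //; exact: (alD _ _).1.
have phk : ph G k = sg G h by rewrite /ph hk.
have phh : ph G h = sg G k by [].
have hnk : (h == k) = false by apply/negbTE; rewrite eq_sym.
have offE : forall x, x \in dom G -> ~~ onE G h x -> ~~ onE G h (al G x).
  move=> x xD; rewrite /onE -/k; apply: contra => /orP [] /eqP e.
    by rewrite -(alD _ xD).2 e eqxx orbT.
  by rewrite -(alD _ xD).2 e hk eqxx.
have Emh1 : del_markh G h = con_markh (dual G) h.
  rewrite /del_markh /con_markh /= -/k phk phh.
  case C: (fconnect (ph G) h k).
    case: (boolP (sg G h == h)) => //= _.
    apply/negbTE/negP => /andP [_ /eqP e].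
    by move: (fconnect_fix (etrans phh e) C) => /eqP; rewrite eq_sym hnk.
  case: (boolP (sg G h == h)) => /= [/eqP e|_]; last by rewrite andbC.
  move/negbT/negP: C; case; apply: (fconnect_sym_on phD phinj kD hD).
  by rewrite -e -phk fconnect1.
have Emk1 : del_markk G h = con_markk (dual G) h.
  rewrite /del_markk /con_markk /= -/k phh.
  case: (boolP (sg G k == k)) => [/eqP e|]; last by rewrite andbF.
  by rewrite andbT; apply/esym; rewrite -[X in fconnect _ _ X]e -phh fconnect1.
have Edom1 : dom (dual (pdel G h)) = dom (pcontr (dual G) h).
  by rewrite /= Emh1 Emk1.
have Emh2 : con_markh G h = del_markh (dual G) h.
  rewrite /del_markh /con_markh /= -/k phk phh.
  case C: (fconnect (sg G) h k).
    case: (boolP (sg G k == h)) => //= _.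
    apply/esym/negbTE/negP => /andP [_ /eqP e].
    by move: (fconnect_fix e C) => /eqP; rewrite eq_sym hnk.
  case: (boolP (sg G k == h)) => /= [/eqP e|_]; last by rewrite andbC.
  move/negbT/negP: C; case; apply: (fconnect_sym_on sgD sginj kD hD).
  by rewrite -[X in fconnect _ _ X]e fconnect1.
have Emk2 : con_markk G h = del_markk (dual G) h.
  rewrite /del_markk /con_markk /= -/k phk.
  case: (boolP (sg G h == k)) => [/eqP e|]; last by rewrite andbF.
  by rewrite andbT -[X in fconnect _ _ X]e fconnect1.
have Edom2 : dom (dual (pcontr G h)) = dom (pdel (dual G) h).
  by rewrite /= Emh2 Emk2.
have Esg1 : forall x, x \in dom G ->
    sg (dual (pdel G h)) x = sg (pcontr (dual G) h) x.
  move=> x xD; rewrite /= /ph /= /del_sg /con_sg -/k.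
  change (onE (dual G) h) with (onE G h).
  case: (boolP (onE G h x)) => [xo|xo] /=; first by rewrite xo.
  rewrite (negbTE (offE _ xD xo)) -/(ph G x).
  case: (boolP (onE G h (ph G x))) => // /orP [] /eqP ->.
    by rewrite /ph hk' (alD _ (sgD _ hD)).2.
  by rewrite /ph hk' (alD _ (sgD _ kD)).2.
have Esg2 : forall x, x \in dom G ->
    sg (dual (pcontr G h)) x = sg (pdel (dual G) h) x.
  move=> x xD; rewrite /= /ph /= /del_sg /con_sg -/k.
  change (onE (dual G) h) with (onE G h).
  case: (boolP (onE G h x)) => [xo|xo] /=; first by rewrite xo.
  rewrite (negbTE (offE _ xD xo)) -/(ph G x).
  done.
have Esame : fconnect (ph (dual G)) h k = fconnect (sg G) h k.
  apply: (fconnect_eq_on _ hD) => [z zD|z zD].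
    by rewrite /ph /= phD ?(alD _ zD).1.
  by rewrite /ph /= /ph (alD _ zD).2.
split.
  exists (fun x => x); split; first split.
  - by move=> x; rewrite -Edom1.
  - by [].
  - by move=> y; rewrite -Edom1 => yD; exists y.
  split.
  - move=> x; rewrite [dom _]/= inE => /andP [xD _]; split; [exact: Esg1 | by []].
  - by [].
  - by [].
  - by left.
exists (fun x => x); split; first split.
- by move=> x; rewrite -Edom2.
- by [].
- by move=> y; rewrite -Edom2 => yD; exists y.
split.
- move=> x; rewrite [dom _]/= inE => /andP [xD _]; split; [exact: Esg2 | by []].
- by move=> x y _ _; rewrite /= Esame.
- by move=> x _; rewrite /= Esame.
- by left.
Qed.
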